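(* Let $P$ be a conical refinement monoid containing order-ideals $I,I'$ with $I\cap I'=0$, and let $\varphi\colon I\to I'$ be a monoid isomorphism. Let $Q$ be the crowned pushout of $(P,I,I',\varphi)$. Then $Q=P/\!\sim$, where $\sim$ is the congruence on $P$ generated by $x+i\sim x+\varphi(i)$ for $i\in I$, $x\in P$, with the coequalizing map the canonical projection $\pi\colon P\to Q$. Moreover $Q$ is a conical refinement monoid, and $Q$ contains an order-ideal $Z$ isomorphic to $I$ such that $\pi$ induces an isomorphism $P/(I+I')\cong Q/Z$.
   Context: Monoids are abelian; conical means $x+y=0\Rightarrow x=y=0$; refinement monoid means every $x_1+x_2=y_1+y_2$ admits $x_{ij}$ with $x_i=x_{i1}+x_{i2}$, $y_j=x_{1j}+x_{2j}$. An order-ideal is a nonempty $I\subseteq P$ with $x+y\in I\iff x,y\in I$; $P/I$ denotes the quotient by $x\equiv y\iff x+u=y+v$ for some $u,v\in I$. The crowned pushout of $(P,I,I',\varphi)$ is the coequalizer, in the category of monoids, of the inclusion $I\to P$ and the composite $I\xrightarrow{\varphi}I'\hookrightarrow P$: a homomorphism $f\colon P\to Q$ with $f(x)=f(\varphi(x))$ for all $x\in I$, through which every homomorphism $g$ with $g(x)=g(\varphi(x))$ ($x\in I$) factors uniquely. *)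

(* Defs.v *)
From HB Require Import structures.
From mathcomp Require Import all_boot all_algebra.
Set Implicit Arguments. Unset Strict Implicit. Unset Printing Implicit Defensive.
Import GRing.Theory.
Local Open Scope ring_scope.

Definition is_monoid_hom (M N : nmodType) (f : M -> N) : Prop :=
  f 0 = 0 /\ forall x y, f (x + y) = f x + f y.

Definition conical (M : nmodType) : Prop :=
  forall x y : M, x + y = 0 -> x = 0 /\ y = 0.

Definition refinement_monoid (M : nmodType) : Prop :=
  forall x1 x2 y1 y2 : M, x1 + x2 = y1 + y2 ->
    exists x11 x12 x21 x22 : M,
      [/\ x1 = x11 + x12, x2 = x21 + x22, y1 = x11 + x21 & y2 = x12 + x22].

Definition order_ideal (M : nmodType) (I : M -> Prop) : Prop :=
  (exists x, I x) /\ forall x y : M, I (x + y) <-> (I x /\ I y).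

(* the congruence x == y (mod I) : x + u = y + v for some u, v in I,
   i.e. the relation defining M/I *)
Definition quot_rel (M : nmodType) (I : M -> Prop) (x y : M) : Prop :=
  exists u v, I u /\ I v /\ x + u = y + v.

Definition ideal_sum (M : nmodType) (I I' : M -> Prop) (x : M) : Prop :=
  exists i i', I i /\ I' i' /\ x = i + i'.

Definition monoid_iso_on (M N : nmodType) (I : M -> Prop) (J : N -> Prop)
  (phi : M -> N) : Prop :=
  [/\ forall x, I x -> J (phi x),
      phi 0 = 0,
      forall x y, I x -> I y -> phi (x + y) = phi x + phi y,
      forall x y, I x -> I y -> phi x = phi y -> x = y
    & forall z, J z -> exists2 x, I x & phi x = z].

(* f : P -> Q is the crowned pushout (coequalizer of I -> P and
   I --phi--> I' -> P in the category of abelian monoids) *)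
Definition crowned_pushout (P : nmodType) (I : P -> Prop) (phi : P -> P)
  (Q : nmodType) (f : P -> Q) : Prop :=
  [/\ is_monoid_hom f,
      forall x, I x -> f x = f (phi x)
    & forall (R : nmodType) (g : P -> R), is_monoid_hom g ->
        (forall x, I x -> g x = g (phi x)) ->
        exists! h : Q -> R, is_monoid_hom h /\ forall x, g x = h (f x)].

Inductive crowned_cong (P : nmodType) (I : P -> Prop) (phi : P -> P) :
  P -> P -> Prop :=
| cc_base x i : I i -> crowned_cong I phi (x + i) (x + phi i)
| cc_refl x : crowned_cong I phi x x
| cc_sym x y : crowned_cong I phi x y -> crowned_cong I phi y x
| cc_trans x y z : crowned_cong I phi x y -> crowned_cong I phi y z ->
    crowned_cong I phi x z
| cc_add x y x' y' : crowned_cong I phi x y -> crowned_cong I phi x' y' ->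
    crowned_cong I phi (x + x') (y + y').

(* Main.v *)
Require Import Defs.
From HB Require Import structures.
From mathcomp Require Import all_boot all_algebra.
From Stdlib Require Import ClassicalEpsilon FunctionalExtensionality PropExtensionality ProofIrrelevance.
Set Implicit Arguments. Unset Strict Implicit.
Import GRing.Theory.
Local Open Scope ring_scope.

Definition ccanon (P : nmodType) (I : P -> Prop) (phi : P -> P) (x : P) : P :=
  epsilon (inhabits (0:P)) (crowned_cong I phi x).

Lemma ccanon_spec (P : nmodType) (I : P -> Prop) (phi : P -> P) x :
  crowned_cong I phi x (ccanon I phi x).
Proof. by apply: (epsilon_spec (inhabits 0) (crowned_cong I phi x)); exists x; apply: cc_refl. Qed.

Lemma ccanon_eq (P : nmodType) (I : P -> Prop) (phi : P -> P) x y :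
  crowned_cong I phi x y -> ccanon I phi x = ccanon I phi y.
Proof.
move=> h; rewrite /ccanon; congr epsilon.
apply: functional_extensionality => z; apply: propositional_extensionality; split=> H.
  exact: cc_trans (cc_sym h) H.
exact: cc_trans h H.
Qed.

Lemma ccanon_iff (P : nmodType) (I : P -> Prop) (phi : P -> P) x y :
  ccanon I phi x = ccanon I phi y <-> crowned_cong I phi x y.
Proof.
split; last exact: ccanon_eq.
move=> e; apply: cc_trans (ccanon_spec I phi x) _; rewrite e; exact: cc_sym (ccanon_spec _ _ _).
Qed.

Lemma ccanonK (P : nmodType) (I : P -> Prop) (phi : P -> P) x :
  ccanon I phi (ccanon I phi x) = ccanon I phi x.
Proof. apply: ccanon_eq; exact: cc_sym (ccanon_spec _ _ _). Qed.

Definition Cq (P : nmodType) (I : P -> Prop) (phi : P -> P) :=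
  {x : P | ccanon I phi x == x}.

HB.instance Definition _ (P : nmodType) (I : P -> Prop) (phi : P -> P) :=
  Choice.on (Cq I phi).

Definition cmk (P : nmodType) (I : P -> Prop) (phi : P -> P) (x : P) : Cq I phi :=
  exist _ (ccanon I phi x) (introT eqP (ccanonK I phi x)).

Lemma cmk_val (P : nmodType) (I : P -> Prop) (phi : P -> P) (a : Cq I phi) :
  cmk I phi (val a) = a.
Proof. by apply: val_inj => /=; apply/eqP; case: a. Qed.

Lemma cmk_eq (P : nmodType) (I : P -> Prop) (phi : P -> P) x y :
  cmk I phi x = cmk I phi y <-> crowned_cong I phi x y.
Proof.
rewrite -ccanon_iff; split; first by move/(congr1 val).
by move=> e; apply: val_inj.
Qed.

Definition cadd (P : nmodType) (I : P -> Prop) (phi : P -> P) (a b : Cq I phi) :=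
  cmk I phi (val a + val b).

Lemma cmkD (P : nmodType) (I : P -> Prop) (phi : P -> P) x y :
  cmk I phi (x + y) = cadd (cmk I phi x) (cmk I phi y).
Proof.
apply/cmk_eq; apply: cc_add; exact: ccanon_spec.
Qed.

Lemma caddA (P : nmodType) (I : P -> Prop) (phi : P -> P) : associative (@cadd P I phi).
Proof.
move=> a b c; rewrite -[a]cmk_val -[b]cmk_val -[c]cmk_val -!cmkD; congr cmk; exact: addrA.
Qed.

Lemma caddC (P : nmodType) (I : P -> Prop) (phi : P -> P) : commutative (@cadd P I phi).
Proof. by move=> a b; rewrite /cadd addrC. Qed.

Lemma cadd0 (P : nmodType) (I : P -> Prop) (phi : P -> P) : left_id (cmk I phi 0) (@cadd P I phi).
Proof. by move=> a; rewrite -[a]cmk_val -cmkD add0r. Qed.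

HB.instance Definition _ (P : nmodType) (I : P -> Prop) (phi : P -> P) :=
  GRing.isNmodule.Build (Cq I phi) (@caddA P I phi) (@caddC P I phi) (@cadd0 P I phi).

Lemma cmk_hom (P : nmodType) (I : P -> Prop) (phi : P -> P) :
  is_monoid_hom (cmk I phi : P -> Cq I phi).
Proof. by split=> // x y; rewrite cmkD. Qed.

Definition Hyps (P : nmodType) (I I' : P -> Prop) (phi : P -> P) :=
  [/\ refinement_monoid P, order_ideal I, order_ideal I',
      (forall x, I x -> I' x -> x = 0) & monoid_iso_on I I' phi].

Definition psiR (P : nmodType) (I : P -> Prop) (phi : P -> P) (u k : P) :=
  exists i j, [/\ I i, I j, u = i + phi j & k = i + j].

Definition Rrel (P : nmodType) (I : P -> Prop) (phi : P -> P) (x y : P) :=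
  exists z u v k, [/\ psiR I phi u k, psiR I phi v k, x = z + u & y = z + v].

Lemma oi0 (P : nmodType) (I : P -> Prop) : order_ideal I -> I 0.
Proof. by case=> [[x Hx] H]; have := (H x 0).1; rewrite addr0 => /(_ Hx) []. Qed.

Lemma oiD (P : nmodType) (I : P -> Prop) x y : order_ideal I -> I x -> I y -> I (x + y).
Proof. by case=> _ H hx hy; apply/H. Qed.

Lemma oiL (P : nmodType) (I : P -> Prop) x y : order_ideal I -> I (x + y) -> I x.
Proof. by case=> _ H /H []. Qed.

Lemma oiR (P : nmodType) (I : P -> Prop) x y : order_ideal I -> I (x + y) -> I y.
Proof. by case=> _ H /H []. Qed.

Lemma uniq_dec (P : nmodType) (I I' : P -> Prop) (phi : P -> P) :
  Hyps I I' phi -> forall i j i' j', I i -> I j -> I i' -> I j' ->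
  i + phi j = i' + phi j' -> i = i' /\ j = j'.
Proof.
case=> href hI hI' hd [hm h0 hD hinj hs] i j i' j' Ii Ij Ii' Ij' e.
have [a [b [c [d [e1 e2 e3 e4]]]]] := href _ _ _ _ e.
have b0 : b = 0.
  apply: hd; first by apply: (oiR (x:=a) hI); rewrite -e1.
  by apply: (oiL (y:=d) hI'); rewrite -e4; apply: hm.
have c0 : c = 0.
  apply: hd; first by apply: (oiR (x:=a) hI); rewrite -e3.
  by apply: (oiL (y:=d) hI'); rewrite -e2; apply: hm.
split; first by rewrite e1 e3 b0 c0 !addr0.
by apply: hinj => //; rewrite e2 e4 b0 c0 !add0r.
Qed.

Lemma psiR_fun (P : nmodType) (I I' : P -> Prop) (phi : P -> P) :
  Hyps I I' phi -> forall u k k', psiR I phi u k -> psiR I phi u k' -> k = k'.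
Proof.
move=> H u k k' [i [j [Ii Ij -> ->]]] [i' [j' [Ii' Ij' e ->]]].
by have [-> ->] := uniq_dec H Ii Ij Ii' Ij' e.
Qed.

Lemma psiRD (P : nmodType) (I I' : P -> Prop) (phi : P -> P) :
  Hyps I I' phi -> forall u v k l, psiR I phi u k -> psiR I phi v l ->
  psiR I phi (u + v) (k + l).
Proof.
case=> href hI hI' hd [hm h0 hD hinj hs] u v k l
  [i [j [Ii Ij -> ->]]] [i' [j' [Ii' Ij' -> ->]]].
exists (i + i'), (j + j'); split; try exact: oiD.
  by rewrite hD // addrACA.
by rewrite addrACA.
Qed.

Lemma psiR_split (P : nmodType) (I I' : P -> Prop) (phi : P -> P) :
  Hyps I I' phi -> forall c d k, psiR I phi (c + d) k ->
  exists kc kd, [/\ psiR I phi c kc, psiR I phi d kd & k = kc + kd].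
Proof.
case=> href hI hI' hd [hm h0 hD hinj hs] c d k [i [j [Ii Ij e ->]]].
have [i1 [i2 [e1 [e2 [f1 [f2 [f3 f4]]]]]]] := href _ _ _ _ (esym e).
have Ie1 : I' e1 by apply: (oiL (y:=e2) hI'); rewrite -f2; apply: hm.
have Ie2 : I' e2 by apply: (oiR (x:=e1) hI'); rewrite -f2; apply: hm.
have [j1 Ij1 ej1] := hs _ Ie1.
have [j2 Ij2 ej2] := hs _ Ie2.
have ej : j = j1 + j2.
  apply: hinj => //; first exact: oiD.
  by rewrite hD // ej1 ej2.
have Ii1 : I i1 by apply: (oiL (y:=i2) hI); rewrite -f1.
have Ii2 : I i2 by apply: (oiR (x:=i1) hI); rewrite -f1.
exists (i1 + j1), (i2 + j2); split.
- by exists i1, j1; split; rewrite // f3 ej1.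
- by exists i2, j2; split; rewrite // f4 ej2.
by rewrite f1 ej addrACA.
Qed.

Lemma psiR_self (P : nmodType) (I I' : P -> Prop) (phi : P -> P) :
  Hyps I I' phi -> forall k, I k -> psiR I phi k k.
Proof.
case=> href hI hI' hd [hm h0 hD hinj hs] k Ik.
by exists k, 0; split; rewrite ?h0 ?addr0 //; apply: oi0.
Qed.

Lemma psiR_phi (P : nmodType) (I I' : P -> Prop) (phi : P -> P) :
  Hyps I I' phi -> forall k, I k -> psiR I phi (phi k) k.
Proof.
case=> href hI hI' hd [hm h0 hD hinj hs] k Ik.
by exists 0, k; split; rewrite ?add0r //; apply: oi0.
Qed.

Lemma Rrel_trans (P : nmodType) (I I' : P -> Prop) (phi : P -> P) :
  Hyps I I' phi -> forall x y w, Rrel I phi x y -> Rrel I phi y w -> Rrel I phi x w.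
Proof.
move=> H x y w [z [u [v [k [pu pv -> ey]]]]] [z' [u' [v' [k' [pu' pv' e' ->]]]]].
have href := H; case: href => href _ _ _ _.
rewrite ey in e'.
have [a [b [c [d [e1 e2 e3 e4]]]]] := href _ _ _ _ e'.
rewrite e2 in pv; rewrite e4 in pu'.
have [kc [kd [pc pd ekv]]] := psiR_split H pv.
have [kb [kd' [pb pd' eku]]] := psiR_split H pu'.
have edd := psiR_fun H pd pd'; subst kd'.
exists a, (b + u), (c + v'), (kb + k); split.
- exact (psiRD H pb pu).
- have -> : kb + k = kc + k' by rewrite ekv eku addrCA addrA.
  exact (psiRD H pc pv').
- by rewrite e1 addrA.
by rewrite e3 addrA.
Qed.

Lemma cc_Rrel (P : nmodType) (I I' : P -> Prop) (phi : P -> P) :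
  Hyps I I' phi -> forall x y, crowned_cong I phi x y <-> Rrel I phi x y.
Proof.
move=> H x y; split.
  elim=> {x y}.
  - move=> x i Ii; exists x, i, (phi i), i; split=> //.
      exact (psiR_self H Ii).
    exact (psiR_phi H Ii).
  - move=> x; exists x, 0, 0, 0; split; rewrite ?addr0 //;
    by apply: (psiR_self H); case: H => _ hI _ _ _; apply: oi0.
  - by move=> x y _ [z [u [v [k [? ? ? ?]]]]]; exists z, v, u, k; split.
  - by move=> x y z _ h1 _ h2; apply: (Rrel_trans H h1 h2).
  move=> x y x' y' _ [z [u [v [k [p1 p2 -> ->]]]]] _ [z' [u' [v' [k' [p3 p4 -> ->]]]]].
  exists (z + z'), (u + u'), (v + v'), (k + k'); split.
  - exact (psiRD H p1 p3).
  - exact (psiRD H p2 p4).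
  - by rewrite addrACA.
  by rewrite addrACA.
case=> z [u [v [k [[i [j [Ii Ij -> ->]]] [i' [j' [Ii' Ij' -> ek]]] -> ->]]]].
apply: (@cc_trans _ _ _ _ (z + i + j)).
  rewrite addrA; apply: cc_sym; exact: cc_base.
apply: (@cc_trans _ _ _ _ (z + i' + j')).
  by rewrite -!addrA ek; apply: cc_refl.
rewrite [z + (_ + _)]addrA; exact: cc_base.
Qed.

Lemma psiR_I (P : nmodType) (I I' : P -> Prop) (phi : P -> P) :
  Hyps I I' phi -> forall u k, psiR I phi u k -> I k.
Proof. by case=> _ hI _ _ _ u k [i [j [Ii Ij _ ->]]]; apply: oiD. Qed.

Lemma psiR_inI (P : nmodType) (I I' : P -> Prop) (phi : P -> P) :
  Hyps I I' phi -> forall u k, I u -> psiR I phi u k -> u = k.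
Proof.
case=> href hI hI' hd [hm h0 hD hinj hs] u k Iu [i [j [Ii Ij eu ->]]].
have Ipj : I (phi j) by apply: (oiR (x:=i) hI); rewrite -eu.
have pj0 : phi j = 0 by apply: hd; [exact: Ipj | exact: (hm _ Ij)].
have j0 : j = 0 by apply: hinj => //; [apply: oi0 | rewrite h0].
by rewrite eu pj0 j0 !addr0.
Qed.

Lemma psiR_sum (P : nmodType) (I I' : P -> Prop) (phi : P -> P) :
  Hyps I I' phi -> forall a w k, I a -> psiR I phi w k -> ideal_sum I I' (a + w).
Proof.
case=> href hI hI' hd [hm h0 hD hinj hs] a w k Ia [i [j [Ii Ij -> _]]].
exists (a + i), (phi j); split; first exact: oiD.
by split; [exact: (hm _ Ij) | rewrite addrA].
Qed.

Lemma psiR_00 (P : nmodType) (I I' : P -> Prop) (phi : P -> P) :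
  Hyps I I' phi -> conical P -> forall u, psiR I phi u 0 -> u = 0.
Proof.
case=> href hI hI' hd [hm h0 hD hinj hs] hc u [i [j [Ii Ij -> e]]].
have [-> ->] := hc _ _ (esym e).
by rewrite h0 addr0.
Qed.

Theorem mainTheorem9 (P : nmodType) (I I' : P -> Prop) (phi : P -> P)
  (hcon : conical P) (href : refinement_monoid P)
  (hI : order_ideal I) (hI' : order_ideal I')
  (hdisj : forall x, I x -> I' x -> x = 0)
  (hphi : monoid_iso_on I I' phi)
  (Q : nmodType) (pi : P -> Q) (hQ : crowned_pushout I phi pi) :
  [/\ (forall q : Q, exists x, pi x = q),
      (forall x y, pi x = pi y <-> crowned_cong I phi x y),
      conical Q,
      refinement_monoid Q
    & exists Z : Q -> Prop,
        [/\ order_ideal Z,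
            (exists psi : P -> Q, monoid_iso_on I Z psi)
          & forall x y, quot_rel (ideal_sum I I') x y <->
                        quot_rel Z (pi x) (pi y)]].
Proof.
have H : Hyps I I' phi by split.
case: hQ => [[pi0 piD] picoeq piuniv].
have gres : forall x, I x -> cmk I phi x = cmk I phi (phi x).
  move=> x Ix; apply/cmk_eq; have := @cc_base P I phi 0 x Ix; by rewrite !add0r.
have [h [[hhom hfac] _]] := piuniv _ _ (cmk_hom I phi) gres.
have cc_pi : forall x y, crowned_cong I phi x y -> pi x = pi y.
  move=> x y; elim=> {x y}.
  - by move=> x i Ii; rewrite !piD (picoeq _ Ii).
  - by [].
  - by move=> x y _ ->.
  - by move=> x y z _ -> _ ->.
  by move=> x y x' y' _ e1 _ e2; rewrite !piD e1 e2.
have pieq : forall x y, pi x = pi y <-> crowned_cong I phi x y.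
  move=> x y; split; last exact: cc_pi.
  by move=> e; apply/cmk_eq; rewrite !hfac e.
have piR : forall x y, pi x = pi y <-> Rrel I phi x y.
  by move=> x y; split => [/pieq/(cc_Rrel H x y).1 | /(cc_Rrel H x y).2/pieq].
pose k := fun a : Cq I phi => pi (val a).
have kcan : forall x, k (cmk I phi x) = pi x.
  by move=> x; rewrite /k /=; apply: cc_pi; apply: cc_sym; apply: ccanon_spec.
have khom : is_monoid_hom k.
  split; first by have -> : (0 : Cq I phi) = cmk I phi 0 by []; rewrite kcan.
  move=> a b; rewrite -[a]cmk_val -[b]cmk_val -(proj2 (cmk_hom I phi)) !kcan; exact: piD.
have surj : forall q : Q, exists x, pi x = q.
  have [h0 [_ uniq]] := piuniv _ _ (conj pi0 piD) picoeq.
  have e1 : h0 = id by apply: uniq; split; first by split.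
  have e2 : h0 = (fun q => k (h q)).
    apply: uniq; split.
      split; first by rewrite (proj1 hhom) (proj1 khom).
      by move=> a b; rewrite (proj2 hhom) (proj2 khom).
    by move=> x; rewrite -hfac kcan.
  move=> q; exists (val (h q)).
  have := congr1 (fun f => f q) e2; rewrite e1 => e; exact: (esym e).
have pipsi : forall u k, psiR I phi u k -> pi u = pi k.
  move=> u kk pu; apply/piR; exists 0, u, kk, kk; split; rewrite ?add0r //.
  exact: (psiR_self H (psiR_I H pu)).
split => //.
-
  move=> q1 q2.
  have [x1 <-] := surj q1; have [x2 <-] := surj q2.
  rewrite -piD -pi0 => /piR [z [u [v [kk [pu pv e1 e2]]]]].
  have [z0 v0] := hcon _ _ (esym e2).
  have kk0 : kk = 0.
    apply: (psiR_fun H pv); rewrite v0; apply: (psiR_self H); exact: oi0.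
  rewrite kk0 in pu; have u0 := psiR_00 H hcon pu.
  rewrite z0 u0 addr0 in e1.
  by have [-> ->] := hcon _ _ e1; rewrite pi0.
-
  move=> q1 q2 q3 q4.
  have [x1 <-] := surj q1; have [x2 <-] := surj q2.
  have [y1 <-] := surj q3; have [y2 <-] := surj q4.
  rewrite -!piD => /piR [z [u [v [kk [pu pv e1 e2]]]]].
  have [p11 [p12 [p21 [p22 [ex1 ex2 ez eu]]]]] := href _ _ _ _ e1.
  have [r11 [r12 [r21 [r22 [ey1 ey2 ez' ev]]]]] := href _ _ _ _ e2.
  rewrite ez in ez'.
  have [e11 [e12 [e21 [e22 [ep1 ep2 er1 er2]]]]] := href _ _ _ _ ez'.
  rewrite eu in pu; rewrite ev in pv.
  have [ka [kb [pa pb ek1]]] := psiR_split H pu.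
  have [kc [kd [pc pd ek2]]] := psiR_split H pv.
  rewrite ek1 in ek2.
  have [f11 [f12 [f21 [f22 [ea eb ec ed]]]]] := href _ _ _ _ ek2.
  exists (pi (e11 + f11)), (pi (e12 + f12)), (pi (e21 + f21)), (pi (e22 + f22)).
  split.
  - by rewrite ex1 piD (pipsi _ _ pa) ep1 ea !piD addrACA.
  - by rewrite ex2 piD (pipsi _ _ pb) ep2 eb !piD addrACA.
  - by rewrite ey1 piD (pipsi _ _ pc) er1 ec !piD addrACA.
  by rewrite ey2 piD (pipsi _ _ pd) er2 ed !piD addrACA.
exists (fun q => exists2 i, I i & pi i = q); split.
- split; first by exists 0, 0; [exact: oi0 | exact: pi0].
  move=> q1 q2; split; last first.
    by case=> [[i1 I1 <-] [i2 I2 <-]]; exists (i1 + i2); [exact: oiD | exact: piD].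
  case=> i Ii ei.
  have [x1 ex1] := surj q1; have [x2 ex2] := surj q2.
  move: ei; rewrite -ex1 -ex2 -piD => /piR [z [u [v [kk [pu pv e1 e2]]]]].
  have Iz : I z by apply: (oiL (y:=u) hI); rewrite -e1.
  have [a1 [b1 [a2 [b2 [ea1 ea2 ez ev]]]]] := href _ _ _ _ e2.
  rewrite ev in pv.
  have [k1 [k2 [pk1 pk2 _]]] := psiR_split H pv.
  rewrite ez in Iz.
  split.
    exists (a1 + k1); first by apply: (oiD hI); [exact: (oiL (y:=a2) hI) | exact: (psiR_I H pk1)].
    by rewrite ea1 !piD (pipsi _ _ pk1).
  exists (a2 + k2); first by apply: (oiD hI); [exact: (oiR (x:=a1) hI) | exact: (psiR_I H pk2)].
  by rewrite ea2 !piD (pipsi _ _ pk2).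
- exists pi; case: hphi => hm h0 hD hinj hs; split.
  + by move=> x Ix; exists x.
  + exact: pi0.
  + by move=> x y _ _; exact: piD.
  + move=> x y Ix Iy /piR [z [u [v [kk [pu pv ex ey]]]]].
    have Iu : I u by apply: (oiR (x:=z) hI); rewrite -ex.
    have Iv : I v by apply: (oiR (x:=z) hI); rewrite -ey.
    by rewrite ex ey (psiR_inI H Iu pu) (psiR_inI H Iv pv).
  + by move=> q [i Ii <-]; exists i.
move=> x y; rewrite /quot_rel /ideal_sum; split.
  case=> s [t [[a [a' [Ia [Ia' es]]]] [[b [b' [Ib [Ib' et]]]] e]]].
  case: hphi => hm h0 hD hinj hs.
  have [j Ij ej] := hs _ Ia'; have [j' Ij' ej'] := hs _ Ib'.
  exists (pi (a + j)), (pi (b + j')); split.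
    by exists (a + j) => //; exact: oiD.
  split; first by exists (b + j') => //; exact: oiD.
  by rewrite (piD a j) (piD b j') (picoeq _ Ij) (picoeq _ Ij') -(piD a) -(piD b) ej ej' -es -et -!piD e.
case=> q1 [q2 [[i1 I1 <-] [[i2 I2 <-] e]]].
move: e; rewrite -!piD => /piR [z [u [v [kk [pu pv e1 e2]]]]].
exists (i1 + v), (i2 + u); split; first exact: (psiR_sum H I1 pv).
split; first exact: (psiR_sum H I2 pu).
by rewrite !addrA e1 e2 addrAC.
Qed.
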